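(* Let $s\in S^{\mathbb{N}}$ be a directive sequence such that (primitivity) for every $n$ there is $k\ge n$ with $M_{[n,k)}>0$ entrywise, and (strong convergence) $\sum_n|||\pi_vM_{[0,n)}|||_1$ converges for some vector $v\in\mathbb{R}_+^{d+1}\setminus\{0\}$. Then for every letter $a\in A$ and every fixed point $u$ of $s$, $$R_a(u_0)=\Big\{\sum_{n=0}^\infty\pi_v(M_{[0,n)}t_n)\ \Big|\ \cdots\xrightarrow{t_n,s_n}\cdots\xrightarrow{t_0,s_0}a \text{ is a left-infinite path in }\mathcal{A}\Big\}.$$ In particular the Rauzy fractal does not depend on the choice of the fixed point $u$, and it is compact.
   Context: $d\ge1$, $A=\{0,\dots,d\}$, $h(y)=\sum_iy_i$, $P=\{h=0\}$; for $v\in\mathbb{R}_+^{d+1}\setminus\{0\}$, $\pi_v(z)=z-h(z)v/h(v)$ is the projection onto $P$ along $v$; $|||\cdot|||_1$ is the $\ell^1$ operator norm. $S$ is a finite set of unimodular substitutions on $A$ (morphisms of $A^*$ with non-empty images of letters, $|\det\mathrm{ab}(\sigma)|=1$, where $\mathrm{ab}$ is abelianization: $\mathrm{ab}(w)$ counts letters of $w$). For $s=(s_k)$: $M_k=\mathrm{ab}(s_k)$, $M_{[k,n)}=M_k\cdots M_{n-1}$. A fixed point of $s$ is $(u_k)$ with $s_k(u_{k+1})=u_k$ for all $k$. Abelianized prefix automaton $\mathcal{A}$: states $A$, transitions $a\xrightarrow{t,\sigma}b$ ($\sigma\in S$, $t\in\mathbb{Z}^{d+1}$) iff $\sigma(a)=pbq$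 for words $p,q$ with $\mathrm{ab}(p)=t$. A left-infinite path $\cdots\xrightarrow{t_n,s_n}\cdots\xrightarrow{t_0,s_0}a$ is a sequence of states $a_0=a,a_1,a_2,\dots$ with $a_{k+1}\xrightarrow{t_k,s_k}a_k$ a transition for all $k$. For an infinite word $w$ and $a\in A$, $W_a(w)=\{\mathrm{ab}(p):pa\text{ prefix of }w\}$, and $R_a(u_0)=\overline{\pi_v(W_a(u_0))}$, the Rauzy fractal being $R(u_0)=\bigcup_aR_a(u_0)$. *)

(* Defs.v *)
From HB Require Import structures.
From mathcomp Require Import all_boot all_order all_algebra.
From mathcomp Require Import all_classical all_reals all_analysis.
Set Implicit Arguments. Unset Strict Implicit. Unset Printing Implicit Defensive.
Import Order.TTheory GRing.Theory Num.Theory.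
Import numFieldNormedType.Exports.
Local Open Scope classical_set_scope.
Local Open Scope ring_scope.

(* Alphabet A = {0,...,d} is 'I_d.+1.  A substitution is a map from letters to words. *)
Definition subst (d : nat) := {ffun 'I_d.+1 -> seq 'I_d.+1}.

Definition subst_word (d : nat) (sigma : subst d) (w : seq 'I_d.+1) : seq 'I_d.+1 :=
  flatten (map sigma w).

Definition abv (R : realType) (d : nat) (w : seq 'I_d.+1) : 'cV[R]_d.+1 :=
  \col_b (count_mem b w)%:R.

Definition abmx (R : realType) (d : nat) (sigma : subst d) : 'M[R]_d.+1 :=
  \matrix_(b, a) (count_mem b (sigma a))%:R.

Definition unimodular (R : realType) (d : nat) (sigma : subst d) : Prop :=
  (forall a, sigma a != [::]) /\ `|\det (abmx R sigma)| = 1.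

Definition Mprod (R : realType) (d : nat) (s : nat -> subst d) (n k : nat) : 'M[R]_d.+1 :=
  \prod_(n <= i < k) abmx R (s i).

Definition hsum (R : realType) (d : nat) (y : 'cV[R]_d.+1) : R := \sum_i y i ord0.

(* projection onto P = {h = 0} along v, as a matrix: pi_v z = z - h(z) v / h(v) *)
Definition pimx (R : realType) (d : nat) (v : 'cV[R]_d.+1) : 'M[R]_d.+1 :=
  1%:M - (hsum v)^-1 *: (v *m const_mx 1).

Definition piv (R : realType) (d : nat) (v : 'cV[R]_d.+1) (z : 'cV[R]_d.+1) : 'cV[R]_d.+1 :=
  pimx v *m z.

(* l^1 operator norm of a matrix = maximal absolute column sum *)
Definition opnorm1 (R : realType) (m n : nat) (B : 'M[R]_(m, n)) : R :=
  \big[Num.max/0]_(j < n) \sum_(i < m) `|B i j|.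

(* sigma(w) = w' for infinite words (w' is the concatenation of the sigma(w_i)) *)
Definition subst_inf_eq (d : nat) (sigma : subst d) (w w' : nat -> 'I_d.+1) : Prop :=
  forall n i, (i < size (subst_word sigma (mkseq w n)))%N ->
    nth ord0 (subst_word sigma (mkseq w n)) i = w' i.

Definition fixed_point (d : nat) (s : nat -> subst d) (u : nat -> nat -> 'I_d.+1) : Prop :=
  forall k, subst_inf_eq (s k) (u k.+1) (u k).

Definition Wset (R : realType) (d : nat) (w : nat -> 'I_d.+1) (a : 'I_d.+1) : set 'cV[R]_d.+1 :=
  [set abv R (mkseq w n) | n in [set n | w n = a]].

Definition Rauzy_a (R : realType) (d : nat) (v : 'cV[R]_d.+1) (w : nat -> 'I_d.+1)
  (a : 'I_d.+1) : set 'cV[R]_d.+1 :=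
  closure (piv v @` Wset w a).

Definition Rauzy (R : realType) (d : nat) (v : 'cV[R]_d.+1) (w : nat -> 'I_d.+1)
  : set 'cV[R]_d.+1 :=
  \bigcup_(a in [set: 'I_d.+1]) Rauzy_a v w a.

Definition transition (R : realType) (d : nat) (b : 'I_d.+1) (t : 'cV[R]_d.+1)
  (sigma : subst d) (a : 'I_d.+1) : Prop :=
  exists p q : seq 'I_d.+1, sigma b = p ++ a :: q /\ t = abv R p.

Definition left_inf_path (R : realType) (d : nat) (s : nat -> subst d)
  (st : nat -> 'I_d.+1) (t : nat -> 'cV[R]_d.+1) (a : 'I_d.+1) : Prop :=
  st 0%N = a /\ forall k, transition (st k.+1) (t k) (s k) (st k).

Definition path_sums (R : realType) (d : nat) (s : nat -> subst d) (v : 'cV[R]_d.+1)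
  (a : 'I_d.+1) : set 'cV[R]_d.+1 :=
  [set x | exists (st : nat -> 'I_d.+1) (t : nat -> 'cV[R]_d.+1),
     left_inf_path s st t a /\
     series (fun n => piv v (Mprod R s 0 n *m t n)) @ \oo --> x].

(* Main.v *)
Require Import Defs.
From HB Require Import structures.
From mathcomp Require Import all_boot all_order all_algebra.
From mathcomp Require Import all_classical all_reals all_analysis.
From mathcomp Require Import zify.
Import Order.TTheory GRing.Theory Num.Theory.
Import numFieldNormedType.Exports.
Local Open Scope classical_set_scope.
Local Open Scope ring_scope.
Set Implicit Arguments. Unset Strict Implicit. Unset Printing Implicit Defensive.
HB.instance Definition _ (R : realType) (m n : nat) := Complete.on 'M[R]_(m, n).
Section Words.
Open Scope nat_scope.
Variable d : nat.
Implicit Types (sg : subst d) (w : nat -> 'I_d.+1).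

Lemma subst_word_cat sg a b : subst_word sg (a ++ b) = subst_word sg a ++ subst_word sg b.
Proof. by rewrite /subst_word map_cat flatten_cat. Qed.

Lemma subst_mkseqS sg w q :
  subst_word sg (mkseq w q.+1) = subst_word sg (mkseq w q) ++ sg (w q).
Proof.
rewrite /mkseq -[q.+1]addn1 iotaD map_cat subst_word_cat /=.
by rewrite /subst_word /= cats0.
Qed.

Lemma size_subst_ge sg w q : (forall b, sg b != [::]) ->
  (q <= size (subst_word sg (mkseq w q)))%N.
Proof.
move=> hne; elim: q => // q ih; rewrite subst_mkseqS size_cat.
have := hne (w q); case: (sg (w q)) => //= x l _.
by rewrite addnS ltnS (leq_trans ih) // leq_addr.
Qed.

Lemma fp_pos (s : nat -> subst d) u : fixed_point s u -> forall n p' j,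
  (j < size (s n (u n.+1 p')))%N ->
  u n (size (subst_word (s n) (mkseq (u n.+1) p')) + j) = nth ord0 (s n (u n.+1 p')) j /\
  mkseq (u n) (size (subst_word (s n) (mkseq (u n.+1) p')) + j) =
    subst_word (s n) (mkseq (u n.+1) p') ++ take j (s n (u n.+1 p')).
Proof.
move=> hu n p' j hj.
set W := subst_word _ _; set sb := s n _.
have hZ : forall i, (i < size W + size sb)%N -> nth ord0 (W ++ sb) i = u n i.
  move=> i hi; rewrite /W /sb -subst_mkseqS; apply: hu.
  by rewrite subst_mkseqS size_cat.
split.
  rewrite -hZ; first by rewrite nth_cat ltnNge leq_addr /= addKn.
  by rewrite ltn_add2l.
apply: (@eq_from_nth _ (ord0 : 'I_d.+1)).
  by rewrite size_mkseq size_cat size_take hj.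
move=> i; rewrite size_mkseq => hi.
rewrite nth_mkseq // -hZ; last by rewrite (leq_trans hi) // leq_add2l ltnW.
rewrite !nth_cat; case: ifP => // hiW.
rewrite nth_take //; by rewrite ltn_subLR // leqNgt hiW.
Qed.

Lemma desub_ex (s : nat -> subst d) u : (forall n b, s n b != [::]) -> fixed_point s u ->
  forall n p, exists r : nat * nat,
    (r.2 < size (s n (u n.+1 r.1)))%N && (p == size (subst_word (s n) (mkseq (u n.+1) r.1)) + r.2)%N.
Proof.
move=> hne hu n p.
pose f q := size (subst_word (s n) (mkseq (u n.+1) q)).
have ex : exists q, (p < f q.+1)%N.
  by exists p; apply: leq_trans (size_subst_ge _ _ (hne n)).
case: (ex_minnP ex) => q hq hmin.
have hfq : (f q <= p)%N.
  case: q hq hmin => [|q] hq hmin; first by rewrite /f /mkseq /= /subst_word.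
  by rewrite leqNgt; apply/negP => /hmin; rewrite ltnn.
exists (q, p - f q) => /=; apply/andP; split; last by rewrite subnKC.
by move: hq; rewrite /f subst_mkseqS size_cat -ltn_subLR.
Qed.

End Words.
Section Lin.
Variables (R : realType) (d : nat).
Local Notation V := 'cV[R]_d.+1.
Implicit Types (sg : subst d) (w : seq 'I_d.+1).

Lemma abv_nil : abv R [::] = 0 :> V.
Proof. by apply/matrixP => i j; rewrite !mxE. Qed.

Lemma abv_cat w1 w2 : abv R (w1 ++ w2) = abv R w1 + abv R w2.
Proof. by apply/matrixP => i j; rewrite !mxE count_cat natrD. Qed.

Lemma abv_ge0 w i j : 0 <= abv R w i j.
Proof. by rewrite mxE ler0n. Qed.

Lemma abv_one sg x : abmx R sg *m abv R [:: x] = abv R (sg x).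
Proof.
apply/matrixP => i j; rewrite !mxE (bigD1 x) //= big1 => [|a /negbTE hax].
  by rewrite !mxE /= eqxx addn0 mulr1 addr0.
by rewrite !mxE /= eq_sym hax mulr0.
Qed.

Lemma abv_subst sg w : abv R (subst_word sg w) = abmx R sg *m abv R w.
Proof.
elim: w => [|x w ih]; first by rewrite /subst_word /= abv_nil mulmx0.
rewrite -cat1s subst_word_cat abv_cat ih abv_cat mulmxDr abv_one.
by rewrite /subst_word /= cats0.
Qed.

Lemma abv_sum w : \sum_i abv R w i 0 = (size w)%:R.
Proof.
elim: w => [|x w ih]; first by rewrite big1 // => i _; rewrite mxE.
rewrite -cat1s; under eq_bigr do rewrite abv_cat mxE.
rewrite big_split /= ih (bigD1 x) //= big1 => [|a /negbTE hax].
  by rewrite !mxE /= eqxx addr0 -natrD.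
by rewrite mxE /= eq_sym hax.
Qed.

Lemma Mprod_nn (s : nat -> subst d) n : Mprod R s n n = 1.
Proof. by rewrite /Mprod big_geq. Qed.

Lemma MprodS (s : nat -> subst d) m n : (m <= n)%N ->
  Mprod R s m n.+1 = Mprod R s m n *m abmx R (s n).
Proof. by move=> h; rewrite /Mprod big_nat_recr. Qed.

Lemma MprodSl (s : nat -> subst d) m n : (m < n)%N ->
  Mprod R s m n = abmx R (s m) *m Mprod R s m.+1 n.
Proof. by move=> h; rewrite /Mprod big_ltn. Qed.

Lemma mx_entry_le m n (x : 'M[R]_(m, n)) i j : `|x i j| <= `|x|.
Proof.
rewrite [leRHS]/Num.norm /= mx_normrE.
by apply: (le_bigmax _ (fun ij : 'I_m * 'I_n => `|x ij.1 ij.2|) (i, j)).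
Qed.

Lemma mx_norm_le m n (x : 'M[R]_(m, n)) b : 0 <= b -> (forall i j, `|x i j| <= b) -> `|x| <= b.
Proof.
move=> b0 h; rewrite [leLHS]/Num.norm /= mx_normrE.
by apply: bigmax_le => // ij _; apply: h.
Qed.

Lemma opnorm1_ge0 (B : 'M[R]_d.+1) : 0 <= opnorm1 B.
Proof.
apply: le_trans (le_bigmax _ (fun j => \sum_i `|B i j|) ord0).
by apply: sumr_ge0 => i _.
Qed.

Lemma opnorm1_bound (B : 'M[R]_d.+1) (x : V) : (forall j, 0 <= x j 0) ->
  `|B *m x| <= opnorm1 B * \sum_j x j 0.
Proof.
move=> hx; apply: mx_norm_le.
  by apply: mulr_ge0; [apply: opnorm1_ge0 | apply: sumr_ge0].
move=> i k; rewrite mxE ord1 mulr_sumr.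
apply: le_trans (ler_norm_sum _ _ _) _.
apply: ler_sum => j _; rewrite normrM (ger0_norm (hx j)) ler_wpM2r //.
apply: le_trans (le_bigmax _ (fun j => \sum_i `|B i j|) j).
rewrite /=; rewrite (bigD1 i) //= lerDl; by apply: sumr_ge0.
Qed.

End Lin.

Lemma mx_norm_tr (R : realType) m n (x : 'M[R]_(m, n)) : `|x^T| = `|x|.
Proof.
apply/eqP; rewrite eq_le; apply/andP; split; apply: mx_norm_le => // i j.
  by rewrite mxE; apply: mx_entry_le.
by have := mx_entry_le (x^T) j i; rewrite mxE.
Qed.

Lemma trmx_cont (R : realType) m n : continuous (@trmx R m n).
Proof.
move=> /= M s0 /= /(nbhs_ballP (M^T)) [e e0 es].
apply/nbhs_ballP; exists e => //= N [_ MN]; apply/es; split => // i j.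
by rewrite !mxE; exact: MN.
Qed.

Lemma cV_compact (R : realType) n (A : set 'cV[R]_n) (B : R) :
  closed A -> (forall x, A x -> `|x| <= B) -> compact A.
Proof.
move=> cA hB.
pose A' := [set y : 'rV[R]_n | A y^T].
have cA' : closed A' := preimage_closed (in1W (@trmx_cont R 1 n)) cA.
have bA' : bounded_set A'.
  exists B; split => [|M hM y hy]; first by rewrite num_real.
  by have := le_trans (hB _ hy) (ltW hM); rewrite mx_norm_tr.
have kA' := bounded_closed_compact bA' cA'.
have -> : A = trmx @` A'.
  apply/seteqP; split => x.
    by move=> hx; exists x^T; rewrite /A' /= trmxK.
  by move=> [y hy <-].
apply: continuous_compact => //; apply: continuous_subspaceT => y; exact: trmx_cont.
Qed.
Section Desub.
Variables (R : realType) (d : nat) (s : nat -> subst d) (u : nat -> nat -> 'I_d.+1).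
Hypothesis hne : forall n b, s n b != [::].
Hypothesis hu : fixed_point s u.
Local Notation V := 'cV[R]_d.+1.
Local Notation F n p := (size (subst_word (s n) (mkseq (u n.+1) p))).

Definition desub n p : nat * nat := xchoose (desub_ex hne hu n p).

Lemma desubP n p : ((desub n p).2 < size (s n (u n.+1 (desub n p).1)))%N /\
  p = (F n (desub n p).1 + (desub n p).2)%N.
Proof. by have /andP[h1 /eqP h2] := xchooseP (desub_ex hne hu n p). Qed.

Fixpoint pos k m n := if n is n'.+1 then (if (n' < k)%N then m else (desub n' (pos k m n')).1) else m.

Lemma pos_le k m n : (n <= k)%N -> pos k m n = m.
Proof. by case: n => //= n h; rewrite h. Qed.

Lemma pos_S k m n : (k <= n)%N -> pos k m n.+1 = (desub n (pos k m n)).1.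
Proof. by move=> h /=; rewrite ltnNge h. Qed.

Lemma pos_dec k m n : (pos k m n.+1 <= pos k m n)%N.
Proof.
rewrite /=; case: ifP => h; first by rewrite pos_le // ltnW.
have [_ hp] := desubP n (pos k m n).
rewrite [X in (_ <= X)%N]hp; apply: leq_trans (leq_addr _ _).
exact: size_subst_ge.
Qed.

Lemma pos_bound k m n : (pos k m n <= m)%N.
Proof. elim: n => // n ih; exact: leq_trans (pos_dec _ _ _) ih. Qed.

Definition tt k m n : V :=
  abv R (take (desub n (pos k m n)).2 (s n (u n.+1 (desub n (pos k m n)).1))).

Lemma step k m n : (k <= n)%N ->
  transition (u n.+1 (pos k m n.+1)) (tt k m n) (s n) (u n (pos k m n)) /\
  abv R (mkseq (u n) (pos k m n)) =
    abmx R (s n) *m abv R (mkseq (u n.+1) (pos k m n.+1)) + tt k m n.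
Proof.
move=> hk; rewrite pos_S // /tt.
move: (desubP n (pos k m n)); set r := desub n _; move=> [hj hp].
have [h1 h2] := fp_pos hu hj.
rewrite hp h1 h2 abv_cat abv_subst; split => //.
exists (take r.2 (s n (u n.+1 r.1))), (drop r.2.+1 (s n (u n.+1 r.1))); split => //.
by rewrite -drop_nth // cat_take_drop.
Qed.

Lemma invariant k m i :
  Mprod R s 0 k *m abv R (mkseq (u k) m) =
  Mprod R s 0 (k + i) *m abv R (mkseq (u (k + i)) (pos k m (k + i))) +
  \sum_(k <= n < k + i) Mprod R s 0 n *m tt k m n.
Proof.
elim: i => [|i ih].
  by rewrite addn0 big_geq // addr0 pos_le.
rewrite ih addnS big_nat_recr /=; last exact: leq_addr.
have [_ ->] := step m (leq_addr i k).
rewrite mulmxDr -addrA MprodS // mulmxA [X in _ + X]addrC.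
congr (_ + _); by rewrite pos_S // leq_addr.
Qed.

Lemma fwd n p' (P Q : seq 'I_d.+1) a :
  s n (u n.+1 p') = P ++ a :: Q ->
  u n (F n p' + size P)%N = a /\
  abv R (mkseq (u n) (F n p' + size P)%N) =
    abmx R (s n) *m abv R (mkseq (u n.+1) p') + abv R P.
Proof.
move=> hs.
have hj : (size P < size (s n (u n.+1 p')))%N by rewrite hs size_cat /= addnS ltnS leq_addr.
have [h1 h2] := fp_pos hu hj.
rewrite h1 h2 hs nth_cat ltnn subnn /= take_size_cat // abv_cat abv_subst; split => //.
Qed.

Lemma fwd_iter (st : nat -> 'I_d.+1) (t : nat -> V) N m'' :
  (forall n, transition (st n.+1) (t n) (s n) (st n)) -> u N m'' = st N ->
  exists m0, u 0 m0 = st 0 /\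
    abv R (mkseq (u 0) m0) = \sum_(0 <= n < N) Mprod R s 0 n *m t n +
       Mprod R s 0 N *m abv R (mkseq (u N) m'').
Proof.
move=> hp hN.
suff H : forall i, (i <= N)%N -> exists m, u (N - i)%N m = st (N - i)%N /\
   Mprod R s 0 (N - i)%N *m abv R (mkseq (u (N - i)%N) m) =
   \sum_((N - i)%N <= n < N) Mprod R s 0 n *m t n + Mprod R s 0 N *m abv R (mkseq (u N) m'').
  have [m [h1 h2]] := H N (leqnn N); exists m; move: h1 h2.
  by rewrite subnn Mprod_nn mul1mx.
elim => [|i ih] hi.
  by exists m''; rewrite subn0 big_geq // add0r.
have [m [h1 h2]] := ih (ltnW hi).
set k := (N - i.+1)%N.
have hk : (N - i)%N = k.+1 by rewrite /k subnSK.
rewrite hk in h1 h2.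
have [P [Q [hs ht]]] := hp k.
rewrite -h1 in hs.
have [h3 h4] := fwd hs.
exists (F k m + size P)%N; split => //.
have hkN : (k < N)%N by rewrite /k; lia.
rewrite h4 mulmxDr -ht (big_ltn hkN).
by rewrite -addrA -h2 addrC MprodS // mulmxA.
Qed.

Lemma letters_appear N K (hK : (N <= K)%N) (hpos : forall i j, 0 < Mprod R s N K i j) b :
  exists m, u N m = b.
Proof.
have H : forall i n, (n + i = K)%N -> exists Fq,
   abv R (mkseq (u n) Fq) = Mprod R s n K *m abv R [:: u K 0%N].
  elim => [|i ih] n hn.
    by exists 1%N; rewrite addn0 in hn; rewrite hn Mprod_nn mul1mx.
  have [Fq hF] := ih n.+1 ltac:(by rewrite addSnnS).
  have h0 : (0 < size (s n (u n.+1 Fq)))%N by rewrite lt0n size_eq0 hne.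
  have [_ h2] := fp_pos hu h0.
  exists (F n Fq + 0)%N; rewrite h2 take0 cats0 abv_subst hF mulmxA -MprodSl //.
  by rewrite -hn -addSnnS leq_addr.
have [Fq hF] := H (K - N)%N N (subnKC hK).
have : 0 < abv R (mkseq (u N) Fq) b 0.
  rewrite hF mxE (bigD1 (u K 0%N)) //= big1 => [|c /negbTE hc].
    by rewrite !mxE /= eqxx addn0 mulr1 addr0.
  by rewrite !mxE /= eq_sym hc mulr0.
rewrite mxE ltr0n lt0n.
move=> hc; have : b \in mkseq (u N) Fq by rewrite -has_pred1 has_count lt0n.
by case/mapP => i _ ->; exists i.
Qed.

End Desub.
Section Analysis.
Variables (R : realType) (d : nat) (s : nat -> subst d) (v : 'cV[R]_d.+1) (L : nat).
Local Notation V := 'cV[R]_d.+1.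
Hypothesis hL : forall n b, (size (s n b) <= L)%N.
Let c n := opnorm1 (pimx v *m Mprod R s 0 n).
Hypothesis hconv : cvgn (series c).

Definition term (t : nat -> V) n : V := piv v (Mprod R s 0 n *m t n).
Definition isPath (st : nat -> 'I_d.+1) (t : nat -> V) :=
  forall k, transition (st k.+1) (t k) (s k) (st k).
Definition psum (t : nat -> V) : V := limn (series (term t)).

Lemma c_ge0 n : 0 <= c n.
Proof. exact: opnorm1_ge0. Qed.

Lemma term_bound_gen (t : V) n w : t = abv R w ->
  `|piv v (Mprod R s 0 n *m t)| <= c n * (size w)%:R.
Proof.
move=> ->; rewrite /piv mulmxA -abv_sum; apply: opnorm1_bound => j.
exact: abv_ge0.
Qed.

Lemma term_bound st t : isPath st t -> forall n, `|term t n| <= c n * L%:R.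
Proof.
move=> hp n; have [P [Q [hs ht]]] := hp n.
apply: le_trans (term_bound_gen n ht) _.
rewrite ler_wpM2l ?c_ge0 // ler_nat.
by apply: leq_trans (hL n (st n.+1)); rewrite hs size_cat leq_addr.
Qed.

Lemma path_cvg st t : isPath st t -> cvgn (series (term t)).
Proof.
move=> hp; apply: normed_cvg.
apply: (@series_le_cvg _ _ (fun n => L%:R * c n)).
- by move=> n; rewrite normr_ge0.
- by move=> n; rewrite mulr_ge0 ?c_ge0.
- by move=> n /=; rewrite mulrC; apply: term_bound hp n.
- have -> : (fun n => L%:R * c n) = L%:R *: c by [].
  exact: is_cvg_seriesZ.
Qed.

Let C := limn (series c).
Definition tail N := C - series c N.

Lemma series_c_le N : series c N <= C.
Proof.
apply: nondecreasing_cvgn_le hconv N.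
by apply: nondecreasing_series => n _ _; apply: c_ge0.
Qed.

Lemma tail_ge0 N : 0 <= tail N.
Proof. by rewrite /tail subr_ge0 series_c_le. Qed.

Lemma tail_cvg0 : tail @ \oo --> 0.
Proof.
rewrite -(subrr C); apply: cvgB => //; exact: cvg_cst.
Qed.

Lemma tail_small e : 0 < e -> exists N, tail N < e.
Proof.
move=> e0; have := tail_cvg0; move/cvgr0Pnorm_lt => /(_ e e0) [N _ hN].
by exists N; have := hN N (leqnn N); rewrite ger0_norm ?tail_ge0.
Qed.

Lemma cmp st t st' t' N : isPath st t -> isPath st' t' ->
  (forall n, (n < N)%N -> t n = t' n) ->
  `|psum t - psum t'| <= 2 * L%:R * tail N.
Proof.
move=> hp hp' heq.
have cg : (fun M => series (term t) M - series (term t') M) @ \oo --> psum t - psum t'.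
  by apply: cvgB; [apply: path_cvg hp | apply: path_cvg hp'].
have cgn : (fun M => `|series (term t) M - series (term t') M|) @ \oo --> `|psum t - psum t'|.
  exact: cvg_norm.
rewrite -(cvg_lim _ cgn) //; apply: limr_le; first by apply/cvg_ex; eexists; exact: cgn.
near=> M.
rewrite /series /= -sumrB.
apply: le_trans (ler_norm_sum _ _ _) _.
pose e n : R := if (n < N)%N then 0 else 2 * L%:R * c n.
have e0 n : 0 <= e n by rewrite /e; case: ifP => // _; rewrite !mulr_ge0 ?c_ge0.
apply: (@le_trans _ _ (\sum_(0 <= n < M) e n)).
  apply: ler_sum => n _; rewrite /e; case: ifP => hn.
    by rewrite /term (heq n hn) subrr normr0.
  apply: le_trans (ler_normB _ _) _.
  rewrite -mulrA mulr_natl mulr2n; apply: lerD.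
    by rewrite mulrC; apply: term_bound hp n.
  by rewrite mulrC; apply: term_bound hp' n.
apply: (@le_trans _ _ (\sum_(0 <= n < N + M) e n)).
  rewrite [X in _ <= X](big_cat_nat (n := M)) //= ?leq_addl // lerDl.
  by apply: sumr_ge0 => n _.
rewrite (big_cat_nat (n := N)) //= ?leq_addr // big1_seq ?add0r; last first.
  by move=> n /andP[_]; rewrite mem_index_iota /e => /andP[_ ->].
rewrite /tail.
have -> : \sum_(N <= i < N + M) e i = \sum_(N <= i < N + M) 2 * L%:R * c i.
  apply: eq_big_nat => n /andP[hn _]; by rewrite /e ltnNge hn.
rewrite -mulr_sumr ler_wpM2l ?mulr_ge0 // lerBrDr.
apply: le_trans (series_c_le (N + M)); rewrite /series /= addrC.
by rewrite -(big_cat_nat (n := N)) // leq_addr.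
Unshelve. all: by end_near.
Qed.



Lemma tail_small2 e : 0 < e -> exists N, 2 * L%:R * tail N < e.
Proof.
move=> e0; have k0 : 0 < 2 * L%:R + 1 :> R by rewrite ltr_wpDl ?mulr_ge0.
have [N hN] := tail_small (divr_gt0 e0 k0); exists N.
apply: le_lt_trans (_ : (2 * L%:R + 1) * tail N < e).
  by rewrite ler_wpM2r ?tail_ge0 // lerDl.
by rewrite mulrC -ltr_pdivlMr.
Qed.

Lemma closure_normP (A : set V) x :
  closure A x <-> (forall e, 0 < e -> exists y, A y /\ `|x - y| < e).
Proof.
split => [hx e e0 | h B].
  have [y [Ay hy]] := hx _ (nbhsx_ballx x e e0).
  by exists y; split => //; move: hy; rewrite -ball_normE.
move=> /nbhs_normP [e e0 hB]; have [y [Ay hy]] := h e e0.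
by exists y; split => //; apply: hB; rewrite /ball_ /=.
Qed.

Definition G := ((nat -> 'I_d.+1) * (nat -> V))%type.
Definition agree N (g g' : G) : Prop :=
  (forall n, (n <= N)%N -> g'.1 n = g.1 n) /\ (forall n, (n < N)%N -> g'.2 n = g.2 n).
Definition Ext a N (g : G) : set V :=
  [set y | exists g' : G, [/\ g'.1 0%N = a, isPath g'.1 g'.2, agree N g g' & y = psum g'.2]].
Definition upd T (f : nat -> T) n0 y : nat -> T := fun n => if n == n0 then y else f n.

Lemma konig_step a x N g : closure (Ext a N g) x ->
  exists g', agree N g g' /\ closure (Ext a N.+1 g') x.
Proof.
move=> hx; apply: contrapT => hno.
pose gbj (bj : 'I_d.+1 * 'I_L) : G :=
  (upd g.1 N.+1 bj.1, upd g.2 N (abv R (take bj.2 (s N bj.1)))).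
have agb bj : agree N g (gbj bj).
  split => n hn /=; rewrite /upd; case: eqP => // hE; by move: hn; rewrite hE ltnn.
have hbad bj : exists e : R, 0 < e /\ forall y, Ext a N.+1 (gbj bj) y -> e <= `|x - y|.
  apply: contrapT => hne; apply: hno; exists (gbj bj); split => //.
  apply/closure_normP => e e0; apply: contrapT => hne2; apply: hne; exists e; split => // y hy.
  rewrite leNgt; apply/negP => hlt; apply: hne2; exists y; split => //.
have [eps heps] := choice hbad.
pose e0 := \big[Num.min/1]_bj eps bj.
have e0pos : 0 < e0 by apply: lt_bigmin => // bj _; have [] := heps bj.
have [y [[g' [h0 hp hag ->]] hy]] := (closure_normP _ _).1 hx e0 e0pos.
have [P [Q [hs ht]]] := hp N.
have hj : (size P < L)%N.
  by apply: leq_trans (hL N (g'.1 N.+1)); rewrite hs size_cat /= addnS ltnS leq_addr.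
pose bj := (g'.1 N.+1, Ordinal hj).
have [_ hb] := heps bj.
have hE : Ext a N.+1 (gbj bj) (psum g'.2).
  exists g'; split => //; split => n hn /=; rewrite /upd; case: eqP => [-> //|hne].
  - by apply: hag.1; move: hn; rewrite leq_eqVlt => /orP[/eqP //|].
  - by rewrite ht hs take_size_cat.
  - by apply: hag.2; move: hn; rewrite ltnS leq_eqVlt => /orP[/eqP //|].
have := hb _ hE; rewrite leNgt => /negP; apply; apply: lt_le_trans hy _.
exact: bigmin_le.
Qed.

Lemma agree_refl N g : agree N g g.
Proof. by split. Qed.

Lemma konig a x : closure (Ext a 0 (fun _ => a, fun _ => 0)) x ->
  exists st t, [/\ st 0%N = a, isPath st t & x = psum t].
Proof.
move=> hx0.
have hnx : forall N, exists f : G -> G, forall g, closure (Ext a N g) x ->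
    agree N g (f g) /\ closure (Ext a N.+1 (f g)) x.
  move=> N.
  have h : forall g : G, exists g', closure (Ext a N g) x ->
      agree N g g' /\ closure (Ext a N.+1 g') x.
    move=> g; case: (pselect (closure (Ext a N g) x)) => hc.
      by have [g' ?] := konig_step hc; exists g'.
    by exists g.
  by have [f hf] := choice h; exists f.
have [nx hnx'] := choice hnx.
pose Gs := fix Gs n := if n is n'.+1 then nx n' (Gs n') else ((fun _ => a, fun _ => 0) : G).
have good N : closure (Ext a N (Gs N)) x.
  by elim: N => // N ih; exact: (hnx' N (Gs N) ih).2.
have agS N : agree N (Gs N) (Gs N.+1) := (hnx' N _ (good N)).1.
have agM N M : (N <= M)%N -> agree N (Gs N) (Gs M).
  elim: M => [|M ih] hNM.
    by move: hNM; rewrite leqn0 => /eqP ->; apply: agree_refl.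
  move: hNM; rewrite leq_eqVlt => /orP[/eqP ->|hlt]; first exact: agree_refl.
  have [i1 i2] := ih hlt; have [j1 j2] := agS M.
  split => n hn.
    by rewrite j1 ?i1 // (leq_trans hn).
  by rewrite j2 ?i2 // (leq_trans hn).
pose st n := (Gs n).1 n; pose t n := (Gs n.+1).2 n.
have agst N : agree N (Gs N) (st, t).
  split => n hn /=.
    by rewrite /st ((agM n N hn).1 n (leqnn n)).
  by rewrite /t ((agM n.+1 N hn).2 n (ltnSn n)).
have ne N : exists g' : G, [/\ g'.1 0%N = a, isPath g'.1 g'.2 & agree N (Gs N) g'] /\
    `|x - psum g'.2| < 1.
  have [y [[g' [h1 h2 h3 ->]] hy]] := (closure_normP _ _).1 (good N) 1 ltr01.
  by exists g'.
have hpath : isPath st t.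
  move=> k; have [g' [[_ hp [h1 h2]] _]] := ne k.+1.
  have [k1 k2] := agst k.+1.
  have := hp k; rewrite h1 // h1 ?leqnSn // h2 //.
  by rewrite -(k1 k.+1) // -(k1 k) ?leqnSn // -(k2 k).
exists st, t; split => //.
apply/eqP; rewrite -subr_eq0 -normr_le0; apply/ler_addgt0Pr => e e0; rewrite add0r.
have e20 : 0 < e / 2 by rewrite divr_gt0.
have [N hN] := tail_small2 e20.
have [y [[g' [h0 hp hag ->]] hy]] := (closure_normP _ _).1 (good N) _ e20.
have hc := cmp hp hpath (N := N).
have [_ t2] := agst N; have [_ h2] := hag.
have := hc (fun n hn => etrans (h2 n hn) (esym (t2 n hn))) => {}hc.
apply: le_trans (ler_distD (psum g'.2) _ _) _.
by rewrite [e]splitr; apply: lerD; apply: ltW => //; apply: le_lt_trans hc hN.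
Qed.

End Analysis.

Section Main.
Variables (R : realType) (d : nat) (s : nat -> subst d) (v : 'cV[R]_d.+1) (L : nat).
Local Notation V := 'cV[R]_d.+1.
Hypothesis hL : forall n b, (size (s n b) <= L)%N.
Hypothesis hconv : cvgn (series (fun n => opnorm1 (pimx v *m Mprod R s 0 n))).
Variable u : nat -> nat -> 'I_d.+1.
Hypothesis hne : forall n b, s n b != [::].
Hypothesis hu : fixed_point s u.

Definition cst k m (st : nat -> 'I_d.+1) n := if (n <= k)%N then st n else u n (pos hne hu k m n).
Definition ctt k m (t : nat -> V) n := if (n < k)%N then t n else tt R hne hu k m n.

Lemma cpath k m st t : st k = u k m ->
  (forall n, (n < k)%N -> transition (st n.+1) (t n) (s n) (st n)) ->
  isPath s (cst k m st) (ctt k m t).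
Proof.
move=> hk hp n; rewrite /cst /ctt; case: (ltnP n k) => hn.
  by rewrite (ltnW hn); apply: hp.
have [h1 _] := step R hne hu m hn.
case: ifP => hnk; last by [].
have E : n = k by apply/eqP; rewrite eqn_leq hnk hn.
subst n; by rewrite hk; rewrite (pos_le hne hu m (leqnn k)) in h1.
Qed.

Lemma csum k m t M : (k <= M)%N ->
  series (term s v (ctt k m t)) M =
  piv v (\sum_(0 <= n < k) Mprod R s 0 n *m t n + Mprod R s 0 k *m abv R (mkseq (u k) m)) -
  piv v (Mprod R s 0 M *m abv R (mkseq (u M) (pos hne hu k m M))).
Proof.
move=> hkM; rewrite /series /= /term /piv -mulmx_sumr -mulmxBr; congr (_ *m _).
rewrite (big_cat_nat (n := k)) //=.
rewrite (invariant R hne hu k m (M - k)) subnKC //.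
have -> : \sum_(0 <= i < k) Mprod R s 0 i *m ctt k m t i = \sum_(0 <= n < k) Mprod R s 0 n *m t n.
  by apply: eq_big_nat => n /andP[_ hn]; rewrite /ctt hn.
have -> : \sum_(k <= i < M) Mprod R s 0 i *m ctt k m t i = \sum_(k <= n < M) Mprod R s 0 n *m tt R hne hu k m n.
  by apply: eq_big_nat => n /andP[hn _]; rewrite /ctt ltnNge hn.
by rewrite [X in _ + X - _]addrC addrA addrK.
Qed.

Lemma climit k m t :
  series (term s v (ctt k m t)) @ \oo -->
  piv v (\sum_(0 <= n < k) Mprod R s 0 n *m t n + Mprod R s 0 k *m abv R (mkseq (u k) m)).
Proof.
apply/cvgrPdist_lt => e e0.
have c0 := cvg_series_cvg_0 hconv.
have em : 0 < e / (m%:R + 1) by rewrite divr_gt0 // ltr_wpDl.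
have [N0 _ hN0] := (cvgr0Pnorm_lt _).1 c0 _ em.
exists (maxn k N0) => // M /= hM.
rewrite csum; last by apply: leq_trans hM; rewrite leq_maxl.
rewrite opprB addrC subrK.
apply: le_lt_trans (term_bound_gen s v M (erefl _)) _.
rewrite size_mkseq.
have hc := hN0 M (leq_trans (leq_maxr k N0) hM).
rewrite /= ger0_norm ?opnorm1_ge0 // in hc.
apply: le_lt_trans (_ : opnorm1 (pimx v *m Mprod R s 0 M) * (m%:R + 1) < e).
  rewrite ler_wpM2l ?opnorm1_ge0 // natr1 ler_nat.
  exact: leqW (pos_bound _ _ _ _ _).
by rewrite -ltr_pdivlMr // ltr_wpDl.
Qed.



Lemma ps_psum a x : path_sums s v a x <->
  exists st t, [/\ st 0%N = a, isPath s st t & x = psum s v t].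
Proof.
split.
  move=> [st [t [[h0 hp] hc]]]; exists st, t; split => //.
  by rewrite /psum -(cvg_lim _ hc).
move=> [st [t [h0 hp ->]]]; exists st, t; split => //.
exact: (path_cvg hL hconv hp).
Qed.

Lemma ps_closed a : closure (path_sums s v a) `<=` path_sums s v a.
Proof.
move=> x hx; apply/ps_psum; apply: (konig hL hconv).
have sub : path_sums s v a `<=` Ext s v a 0 (fun=> a, fun=> 0).
  move=> y /ps_psum [st [t [h0 hp ->]]]; exists (st, t); split => //.
  split => n hn /=; last by [].
  by move: hn; rewrite leqn0 => /eqP ->.
exact: (closureS sub hx).
Qed.

Lemma W_in_ps a : piv v @` Wset (u 0%N) a `<=` path_sums s v a.
Proof.
move=> _ [_ [n hn <-] <-].
have hp := @cpath 0%N n (fun _ => u 0%N n) (fun _ => 0) erefl (fun k hk => False_ind _ (notF hk)).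
exists (cst 0 n (fun _ => u 0%N n)), (ctt 0 n (fun _ => 0)); split.
  by split => //; rewrite /cst /= hn.
have := @climit 0%N n (fun _ => 0).
by rewrite big_geq // add0r Mprod_nn mul1mx.
Qed.

Hypothesis hprim : forall n, exists k, (n <= k)%N /\ forall i j, 0 < Mprod R s n k i j.

Lemma part1 a : Rauzy_a v (u 0%N) a = path_sums s v a.
Proof.
apply/seteqP; split.
  move=> x hx; apply: ps_closed; apply: (closureS (@W_in_ps a)); exact: hx.
move=> x /ps_psum [st [t [h0 hp ->]]].
apply/closure_normP => e e0.
have [N hN] := tail_small2 L hconv e0.
have [K [hK hpos]] := hprim N.
have [m'' hm''] := letters_appear hne hu hK hpos (st N).
have [m0 [hm0 hab]] := fwd_iter hu hp hm''.
have hp' := cpath (esym hm'') (fun n _ => hp n).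
exists (piv v (abv R (mkseq (u 0%N) m0))); split.
  exists (abv R (mkseq (u 0%N) m0)) => //; exists m0 => //.
  exact: (etrans hm0 h0).
have hl := @climit N m'' t.
rewrite -hab in hl.
have E : psum s v (ctt N m'' t) = piv v (abv R (mkseq (u 0%N) m0)).
  by rewrite /psum (cvg_lim _ hl).
have heq : forall n, (n < N)%N -> t n = ctt N m'' t n by move=> n hn; rewrite /ctt hn.
have hc := cmp hL hconv hp hp' heq.
rewrite E in hc; exact: (le_lt_trans hc hN).
Qed.



Lemma psum_bound st t : isPath s st t ->
  `|psum s v t| <= L%:R * limn (series (fun n => opnorm1 (pimx v *m Mprod R s 0 n))).
Proof.
move=> hp.
have cg := path_cvg hL hconv hp.
have cgn : (fun M => `|series (term s v t) M|) @ \oo --> `|psum s v t|.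
  exact: cvg_norm.
rewrite -(cvg_lim _ cgn) //; apply: limr_le; first by apply/cvg_ex; eexists; exact: cgn.
near=> M.
rewrite /series /=.
apply: le_trans (ler_norm_sum _ _ _) _.
apply: (@le_trans _ _ (\sum_(0 <= n < M) L%:R * opnorm1 (pimx v *m Mprod R s 0 n))).
  by apply: ler_sum => n _; rewrite mulrC; apply: (term_bound v hL hp).
rewrite -mulr_sumr ler_wpM2l //.
exact: (series_c_le hconv M).
Unshelve. all: by end_near.
Qed.

Lemma part3 : compact (Rauzy v (u 0%N)).
Proof.
apply: (@cV_compact _ _ _ (L%:R * limn (series (fun n => opnorm1 (pimx v *m Mprod R s 0 n))))).
  apply: closed_bigcup; first exact: finite_finset.
  by move=> a _; exact: closed_closure.
move=> x [a _]; rewrite part1 => /ps_psum [st [t [_ hp ->]]].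
exact: psum_bound hp.
Qed.

End Main.

Unset Implicit Arguments.

Theorem proposition3p29 (R : realType) (d : nat) (hd : (1 <= d)%N)
  (S : seq (subst d)) (hS : forall sigma, sigma \in S -> unimodular R sigma)
  (s : nat -> subst d) (hs : forall n, s n \in S)
  (hprim : forall n, exists k, (n <= k)%N /\ forall i j, 0 < Mprod R s n k i j)
  (v : 'cV[R]_d.+1) (hv0 : forall i, 0 <= v i ord0) (hv : v != 0)
  (hconv : cvgn (series (fun n => opnorm1 (pimx v *m Mprod R s 0 n)))) :
  (forall u, fixed_point s u -> forall a, Rauzy_a v (u 0%N) a = path_sums s v a) /\
  (forall u u', fixed_point s u -> fixed_point s u' -> Rauzy v (u 0%N) = Rauzy v (u' 0%N)) /\
  (forall u, fixed_point s u -> compact (Rauzy v (u 0%N))).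
Proof.
have hne : forall n b, s n b != [::].
  by move=> n b; have [h _] := hS _ (hs n); exact: h.
pose L := (\max_(sg <- S) \max_(b : 'I_d.+1) size (sg b))%N.
have hL : forall n b, (size (s n b) <= L)%N.
  move=> n b.
  have h1 : (size (s n b) <= \max_(b0 : 'I_d.+1) size (s n b0))%N.
    exact: (@leq_bigmax _ (fun b0 : 'I_d.+1 => size (s n b0)) b).
  have h2 : (\max_(b0 : 'I_d.+1) size (s n b0) <= L)%N.
    rewrite /L; apply: (@leq_bigmax_seq _ S predT (fun sg : subst d => \max_(b : 'I_d.+1) size (sg b)) (s n)) => //.
  exact: leq_trans h1 h2.
split; [|split].
- move=> u hu a; exact: (part1 hL hconv hne hu hprim a).
- move=> u u' hu hu'; rewrite /Rauzy; congr (bigcup _ _); apply: funext => a.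
  by rewrite (part1 hL hconv hne hu hprim a) (part1 hL hconv hne hu' hprim a).
- move=> u hu; exact: (part3 hL hconv hne hu hprim).
Qed.
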